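(* Let $R$ be a semistandard cylindric tableau and $S$ a set of boxes satisfying the input conditions of full multi-insertion, and let $G$ and $H$ be two bumping routes created when $\operatorname{FullMulti}(R,S)$ is performed, with $G_1<H_1$ (the first points, compared in the order $\le$ on points). Then for every plane row $r$ such that both $G(r)$ and $H(r)$ are defined, $H(r)$ is strictly to the left of $G(r)$, and the event that extended $G$ to include $G(r)$ occurred after the event that extended $H$ to include $H(r)$.
   Context: Fix integers $n>k\ge1$. A cylindric partition is a weakly decreasing integer sequence $(\lambda_m)_{m\in\mathbb Z}$ with $\lambda_m=\lambda_{m+k}+n-k$. A point $(x,y)\in\mathbb Z^2$ is in plane row $x$ and plane column $y$ and lies in $\lambda$ if $y\le\lambda_x$; a point $(x,y)$ is strictly left of $(x,y')$ if $y<y'$. Total order on points: $(x_1,y_1)\le(x_2,y_2)$ iff $x_1<x_2$, or $x_1=x_2$ and $y_1\ge y_2$. Boxes are classes of points modulo translation by multiples of $(-k,n-k)$; $\pi$ is the projection; row $x$ of the cylinder is the image of plane row $x$ (indexed mod $k$), column $y$ the image of plane column $y$; for a box $B$ in row $\pi(s)$, $\pi^{-1}_s(B)$ is its representative in plane row $s$. Within a row, boxes are ordered left to right by $y$-coordinates of representatives in a fixed plane row. $\mu\subseteq\lambda$ means $\mu_m\le\lambda_m$ for all $m$. A (semistandard cylindric) tableau of shape $\lambda/\mu$ is a map from the boxes in $\lambda$ but not $\mu$ to a totally ordered alphabet, weakly increasing along plane rows and strictly increasing down plane columns; its shapes are part of its data. Full multi-insertion $\operatorname{FullMulti}(R,S)$: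 input a tableau $R$ with outer shape $\lambda$, inner shape $\mu$, and a set $S$ of boxes not in $\mu$, no two in the same column, such that $\mu$ plus $S$ is a cylindric partition. Choose an integer $r_0$. For $h=r_0,\dots,r_0+k-1$, go through the boxes of $S$ in row $h$ from left to right: if the box is in $\lambda$, remove its entry $x$ and append $(x,h+1)$ to a queue $q_0$; otherwise add the box to $\lambda$. All boxes of $S$ are added to the inner shape. Then, while the current queue $q$ is nonempty: start an empty queue $q'$; remove pairs $(x,s)$ from the front of $q$ one at a time; if $x$ is $\ge$ every entry in row $s$, put $x$ into the leftmost box of row $s$ not in the current outer shape and add it to the outer shape; otherwise replace the leftmost entry $x'$ of row $s$ greater than $x$ by $x$ and append $(x',s+1)$ to $q'$; when $q$ is exhausted set $q:=q'$. These actions happen one after another and thus are totally ordered in time. Bumping route of a point $P$ with $\pi(P)\in S$ in plane row $s_0$: a list of points starting with $P$ (added at the moment $\pi(P)$ is processed in the removal phase). If $\pi(P)$ was in $\lambda$, the pair created from its entry is tracked; whenever the tracked pair is processed and its letter is placed into a box $B$, the point $\pi^{-1}_s(B)$ is appended (this placement is the event extending the route), where $s$ is one more than the plane row of the previously appended point; if an entry $x'$ was displaced, the new pair $(x',\cdot)$ becomes tracked. For a route $H$, $H_1$ is its first point and $H(r)$ is its point in plane row $r$, if any. *)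

(* Defs.v *)
From HB Require Import structures.
From mathcomp Require Import all_boot all_order all_algebra.
Set Implicit Arguments. Unset Strict Implicit. Unset Printing Implicit Defensive.
Import Order.TTheory GRing.Theory Num.Theory.
Local Open Scope ring_scope.

(** Points of Z^2: (plane row, plane column). *)
Definition point := (int * int)%type.
(** Boxes are represented by their (unique) representative lying in a plane
    row in [0, k): a box B = (r, c) with 0 <= r < k is the class of the point
    (r, c) modulo translations by multiples of (-k, n-k). *)
Definition box := (int * int)%type.

(** Events of the insertion: (label of the route = the box of S where the
    route starts, box into which a letter of that route is placed). *)
Definition event := option (box * box).

Definition upd (A : Type) (f : box -> A) (B : box) (v : A) : box -> A :=
  fun B' => if B' == B then v else f B'.

Section Cylindric.
Variables (n k : nat).

Definition shift : int := Posz (n - k)%N.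
Definition kz : int := Posz k.
Definition modk (x : int) : int := (x %% kz)%Z.
Definition divk (x : int) : int := (x %/ kz)%Z.

Definition cylindric (lam : int -> int) : Prop :=
  (forall m : int, lam (m + 1) <= lam m) /\
  (forall m : int, lam m = lam (m + kz) + shift).

Definition proj (P : point) : box := (modk P.1, P.2 + divk P.1 * shift).

Definition is_box (B : box) : bool := (0 <= B.1) && (B.1 < kz).

Definition in_part (lam : int -> int) (P : point) : bool := P.2 <= lam P.1.
Definition box_in (lam : int -> int) (B : box) : bool := B.2 <= lam B.1.
Definition in_skew (lam mu : int -> int) (P : point) : bool :=
  in_part lam P && ~~ in_part mu P.

Definition same_column (B B' : box) : Prop :=
  exists P P' : point, proj P = B /\ proj P' = B' /\ P.2 = P'.2.

Definition pt_le (P Q : point) : bool :=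
  (P.1 < Q.1) || ((P.1 == Q.1) && (Q.2 <= P.2)).
Definition pt_lt (P Q : point) : bool := pt_le P Q && (P != Q).

Definition strictly_left (P Q : point) : Prop := P.1 = Q.1 /\ P.2 < Q.2.

Section Alphabet.
Variables (disp : Order.disp_t) (T : orderType disp).

(** A tableau: outer shape, inner shape, and entries (meaningful on the boxes
    of outer/inner). *)
Record tableau := Tableau {
  outer : int -> int;
  inner : int -> int;
  entry : box -> T }.

Definition is_tableau (R : tableau) : Prop :=
  [/\ cylindric (outer R), cylindric (inner R),
      (forall m, inner R m <= outer R m),
      (forall x y y' : int,
          in_skew (outer R) (inner R) (x, y) ->
          in_skew (outer R) (inner R) (x, y') -> y <= y' ->
          (entry R (proj (x, y)) <= entry R (proj (x, y')))%O) &
      (forall x x' y : int,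
          in_skew (outer R) (inner R) (x, y) ->
          in_skew (outer R) (inner R) (x', y) -> x < x' ->
          (entry R (proj (x, y)) < entry R (proj (x', y)))%O)].

Definition multi_input (R : tableau) (S : seq box) : Prop :=
  [/\ uniq S,
      (forall B, B \in S -> is_box B),
      (forall B, B \in S -> ~~ box_in (inner R) B),
      (forall B B', B \in S -> B' \in S -> B <> B' -> ~ same_column B B') &
      exists nu : int -> int, cylindric nu /\
        forall P : point, in_part nu P <-> (in_part (inner R) P \/ proj P \in S)].

(** Order in which the boxes of S are processed in the removal phase:
    rows h = r0, ..., r0+k-1, each row from left to right. *)
Definition row_index (r0 : int) (B : box) : int := r0 + modk (B.1 - r0).
Definition proc_le (r0 : int) (B B' : box) : bool :=
  (row_index r0 B < row_index r0 B') ||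
  ((row_index r0 B == row_index r0 B') && (B.2 <= B'.2)).

(** State of the algorithm: outer shape, inner shape, entries, boxes of S still
    to be processed in the removal phase, current queue q, next queue q'.
    Queue elements are (letter, row, label of the tracked route). *)
Record state := State {
  st_out : box -> bool;
  st_inn : box -> bool;
  st_ent : box -> T;
  st_todo : seq box;
  st_q : seq (T * int * box);
  st_q' : seq (T * int * box) }.

Definition in_tab (st : state) (B : box) : bool := st_out st B && ~~ st_inn st B.

Definition leftmost_free (st : state) (s : int) (B : box) : Prop :=
  [/\ B.1 = modk s, ~~ st_out st B &
      forall B', B'.1 = modk s -> ~~ st_out st B' -> B.2 <= B'.2].

Definition leftmost_greater (st : state) (s : int) (x : T) (B : box) : Prop :=
  [/\ B.1 = modk s, in_tab st B, (x < st_ent st B)%O &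
      forall B', B'.1 = modk s -> in_tab st B' -> (x < st_ent st B')%O ->
        B.2 <= B'.2].

Inductive step : state -> event -> state -> Prop :=
| StepRemIn st B todo :
    st_todo st = B :: todo -> st_out st B ->
    step st (Some (B, B))
      (State (st_out st) (upd (st_inn st) B true) (st_ent st) todo
             (rcons (st_q st) (st_ent st B, B.1 + 1, B)) (st_q' st))
| StepRemOut st B todo :
    st_todo st = B :: todo -> ~~ st_out st B ->
    step st (Some (B, B))
      (State (upd (st_out st) B true) (upd (st_inn st) B true) (st_ent st) todo
             (st_q st) (st_q' st))
| StepPlace st x s l q B :
    st_todo st = [::] -> st_q st = (x, s, l) :: q ->
    (forall B', B'.1 = modk s -> in_tab st B' -> (st_ent st B' <= x)%O) ->
    leftmost_free st s B ->
    step st (Some (l, B))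
      (State (upd (st_out st) B true) (st_inn st) (upd (st_ent st) B x) [::]
             q (st_q' st))
| StepBump st x s l q B :
    st_todo st = [::] -> st_q st = (x, s, l) :: q ->
    leftmost_greater st s x B ->
    step st (Some (l, B))
      (State (st_out st) (st_inn st) (upd (st_ent st) B x) [::]
             q (rcons (st_q' st) (st_ent st B, s + 1, l)))
| StepSwap st :
    st_todo st = [::] -> st_q st = [::] -> st_q' st <> [::] ->
    step st None
      (State (st_out st) (st_inn st) (st_ent st) [::] (st_q' st) [::])
| StepDone st :
    st_todo st = [::] -> st_q st = [::] -> st_q' st = [::] ->
    step st None st.

Definition init_state (R : tableau) (S : seq box) (r0 : int) : state :=
  State (box_in (outer R)) (box_in (inner R)) (entry R)
        (path.sort (proc_le r0) S) [::] [::].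

(** the execution of FullMulti(R, S) with parameter r0: st t is the state
    after t actions, ev t the event of action t *)
Definition is_run (R : tableau) (S : seq box) (r0 : int)
    (st : nat -> state) (ev : nat -> event) : Prop :=
  st 0%N = init_state R S r0 /\ forall t, step (st t) (ev t) (st t.+1).

End Alphabet.

Definition is_label (B0 : box) (e : event) : bool :=
  if e is Some (l, _) then l == B0 else false.

(** route_pt ev P r X t : the bumping route of P has the point X in plane row r,
    and it was added by the event at time t. *)
Definition route_pt (ev : nat -> event) (P : point) (r : int) (X : point)
    (t : nat) : Prop :=
  exists (b : box) (j : nat),
    [/\ ev t = Some (proj P, b),
        count (fun t' => is_label (proj P) (ev t')) (iota 0 t) = j,
        r = P.1 + Posz j, X.1 = r & proj X = b].

End Cylindric.

(* Main.v *)
Require Import Defs.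
From HB Require Import structures.
From mathcomp Require Import all_boot all_order all_algebra.
From mathcomp Require Import zify.
Import Order.TTheory GRing.Theory Num.Theory.
Set Implicit Arguments. Unset Strict Implicit. Unset Printing Implicit Defensive.
Local Open Scope ring_scope.


Definition updi (A : Type) (f : int -> A) (x : int) (v : A) : int -> A :=
  fun y => if y == x then v else f y.

Section Basic.
Variable k : nat.
Hypothesis kpos : (0 < k)%N.

Definition NR (r : int) : bool := (0 <= r) && (r < kz k).

Lemma kz_gt0 : 0 < kz k.
Proof. rewrite /kz. lia. Qed.

Lemma modk_NR x : NR (modk k x).
Proof.
rewrite /NR /modk modz_ge0 /=; last by rewrite /kz; lia.
by apply: ltz_pmod; apply: kz_gt0.
Qed.

Lemma modk_id x : NR x -> modk k x = x.
Proof. move=> /andP[h1 h2]; rewrite /modk modz_small //; by rewrite h1 h2. Qed.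

Lemma modkDml x y : modk k (modk k x + y) = modk k (x + y).
Proof. by rewrite /modk modzDml. Qed.

Lemma modk_inj1 a b : NR a -> NR b -> modk k (a + 1) = modk k (b + 1) -> a = b.
Proof.
move=> ha hb h.
rewrite -(modk_id ha) -(modk_id hb).
have -> : a = (a + 1) + (-1) by rewrite -addrA addrN addr0.
have -> : b = (b + 1) + (-1) by rewrite -addrA addrN addr0.
by rewrite -modkDml h modkDml.
Qed.

Lemma divk_NR x : NR x -> divk k x = 0.
Proof. move=> /andP[h1 h2]; rewrite /divk divz_small //; rewrite h1 /=; rewrite /kz in h2; lia. Qed.

End Basic.


Section RI.
Variables (k : nat) (disp : Order.disp_t) (T : orderType disp).
Hypothesis kpos : (0 < k)%N.
Variables (R : tableau T) (S : seq box) (r0 : int) (nu : int -> int).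
Hypothesis HSu : uniq S.
Hypothesis HSbox : forall B, B \in S -> NR k B.1.
Hypothesis HSin : forall B, B \in S -> inner R B.1 < B.2.
Hypothesis Hnu : forall r c, NR k r -> (c <= nu r) = (c <= inner R r) || ((r,c) \in S).
Hypothesis Hio : forall r, inner R r <= outer R r.
Hypothesis Hrow : forall r c c', NR k r -> inner R r < c -> c <= c' -> c' <= outer R r ->
  (entry R (r,c) <= entry R (r,c'))%O.

Definition pend (st : state T) := st_q st ++ st_q' st.
Local Notation proc := (proc_le k r0).
Local Notation NR := (NR k).
Local Notation modk := (modk k).

Lemma proc_trans : transitive proc.
Proof. move=> b a c; rewrite /proc_le; set x := row_index _ _ _; set y := row_index _ _ _; set z := row_index _ _ _.
move=> /orP[h1|/andP[/eqP h1 h2]] /orP[h3|/andP[/eqP h3 h4]]; apply/orP.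
- left; lia.
- left; lia.
- left; lia.
- right; apply/andP; split; [apply/eqP; lia| lia].
Qed.

Lemma proc_total : total proc.
Proof. move=> a b; rewrite /proc_le; set x := row_index _ _ _; set y := row_index _ _ _.
case: (ltgtP x y) => h //=; exact: le_total. Qed.

Lemma proc_same_row (B B' : box) : proc B B' -> B.1 = B'.1 -> B.2 <= B'.2.
Proof. rewrite /proc_le /row_index => /orP[h|/andP[_ h]] e //. rewrite e in h. by rewrite ltxx in h. Qed.

Lemma sorted_head_proc B rest B' : sorted proc (B :: rest) -> B' \in rest -> proc B B'.
Proof. move=> /= hp hin. have := order_path_min proc_trans hp. by move/allP/(_ _ hin). Qed.

Record RInv (st : state T) (m : int -> int) (zz e : int -> option T) : Prop := {
  iA : st_todo st != [::] -> st_q' st = [::] /\ (forall r, zz r = None);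
  iB1 : sorted proc (st_todo st);
  iB2 : uniq (st_todo st);
  iB3 : {subset st_todo st <= S};
  iN1 : forall B, B \in S -> B \notin st_todo st -> st_inn st B;
  iN2 : forall B, B \in st_todo st -> ~~ st_inn st B;
  iR0 : forall r, NR r -> inner R r <= m r;
  iM0 : forall B, B \in st_todo st -> m B.1 < B.2;
  iR9 : forall r c, NR r -> st_inn st (r,c) -> st_out st (r,c);
  iR1 : forall r c c', NR r -> in_tab st (r,c) -> in_tab st (r,c') -> c <= c' ->
          (st_ent st (r,c) <= st_ent st (r,c'))%O;
  iR2 : forall r c c', NR r -> st_out st (r,c) -> c' <= c -> st_out st (r,c');
  iR3 : forall r, NR r -> st_out st (r, m r);
  iR4 : forall r c, NR r -> c <= m r -> in_tab st (r,c) ->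
          exists z, zz r = Some z /\ (st_ent st (r,c) <= z)%O;
  iR5 : forall p, p \in pend st -> forall z, zz (modk p.1.2) = Some z -> (z <= p.1.1)%O;
  iR6 : forall tau, sorted (fun a b : T => (a <= b)%O)
           [seq p.1.1 | p <- pend st & modk p.1.2 == tau];
  iR7a : forall p, p \in pend st -> exists e0, e (modk p.1.2) = Some e0 /\ (p.1.1 <= e0)%O;
  iR7b : forall tau z, zz tau = Some z -> exists e0, e tau = Some e0 /\ (z <= e0)%O;
  iR8 : forall r c e0, NR r -> m r < c -> in_tab st (r,c) -> e (modk (r+1)) = Some e0 ->
          (e0 <= st_ent st (r,c))%O
}.

Lemma rinv_init : RInv (init_state k R S r0) (inner R) (fun _ => None) (fun _ => None).
Proof.
have HS : uniq S -> True by [].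
split => //=.
- exact: sort_sorted proc_total S.
- by rewrite sort_uniq.
- by move=> B; rewrite mem_sort.
- by move=> B hB; rewrite mem_sort hB.
- move=> B; rewrite mem_sort /box_in -ltNge; exact: HSin.
- by move=> B; rewrite mem_sort => /HSin.
- rewrite /box_in /= => r c _ h; exact: le_trans h (Hio r).
- rewrite /in_tab /box_in /= => r c c' hr /andP[h1 h2] /andP[h3 h4] hc.
  apply: Hrow => //; rewrite ?ltNge //.
- rewrite /box_in /= => r c c' _ h h'; exact: le_trans h' h.
- rewrite /box_in /= => r _; exact: Hio.
- rewrite /in_tab /box_in /= => r c _ h /andP[_ /negP]; done.
Qed.

Definition StepOK (st : state T) (ev : event) (st' : state T) (m : int -> int) (zz e : int -> option T) :=
 (forall l B, ev = Some (l,B) -> NR B.1 /\ m B.1 < B.2) /\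
 exists m' zz' e', RInv st' m' zz' e' /\ (forall r, m r <= m' r) /\
   (forall l B, ev = Some (l,B) -> m' B.1 = B.2).

Lemma sorted_rcons_le (s : seq T) y : sorted (fun a b : T => (a <= b)%O) s ->
  (forall x, x \in s -> (x <= y)%O) -> sorted (fun a b : T => (a <= b)%O) (rcons s y).
Proof.
case: s => //= x s; elim: s x => /= [|x' s IH] x.
  by move=> _ h; rewrite h // inE eqxx.
move=> /andP[h1 h2] h; rewrite h1 /=; apply: IH => // z hz; apply: h.
by rewrite inE hz orbT.
Qed.

Lemma updE (A : Type) (f : box -> A) B v B' : upd f B v B' = if B' == B then v else f B'.
Proof. by []. Qed.
Lemma updiE (A : Type) (f : int -> A) x v y : updi f x v y = if y == x then v else f y.
Proof. by []. Qed.


Lemma S_between st m zz e rB cB rest : RInv st m zz e -> st_todo st = (rB,cB) :: rest ->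
  forall c, m rB < c < cB -> st_inn st (rB, c).
Proof.
move=> I ht c /andP[h1 h2].
have hBt : (rB,cB) \in st_todo st by rewrite ht mem_head.
have hBS := iB3 I hBt.
have hNR : NR rB := HSbox hBS.
have hcS : (rB,c) \in S.
  have h3 : c <= nu rB.
    have : cB <= nu rB by rewrite Hnu // hBS orbT.
    by apply: le_trans; rewrite ltW.
  move: h3; rewrite Hnu // => /orP[h|//].
  have := iR0 I hNR; lia.
apply: (iN1 I hcS); rewrite ht inE negb_or; apply/andP; split.
  apply/eqP => -[h]; rewrite h in h2; by rewrite ltxx in h2.
apply/negP => hin.
have hs := iB1 I; rewrite ht in hs.
have := proc_same_row (sorted_head_proc hs hin) erefl => /= h; lia.
Qed.

Lemma step_remin st B rest m zz e : RInv st m zz e -> st_todo st = B :: rest -> st_out st B ->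
  StepOK st (Some (B,B)) (State (st_out st) (upd (st_inn st) B true) (st_ent st) rest
     (rcons (st_q st) (st_ent st B, B.1 + 1, B)) (st_q' st)) m zz e.
Proof.
move=> I ht hout.
have hBt : B \in st_todo st by rewrite ht mem_head.
have hBS := iB3 I hBt.
have hNR := HSbox hBS.
have hm := iM0 I hBt.
have hninn := iN2 I hBt.
have [hq' hzz] : st_q' st = [::] /\ (forall r, zz r = None) by apply: (iA I); rewrite ht.
have hu := iB2 I; rewrite ht /= in hu; case/andP: hu => hBrest hurest.
have hs := iB1 I; rewrite ht in hs.
have Sb := S_between I.
move: B ht hout hBt hBS hNR hm hninn hBrest hs Sb => [rB cB] /= ht hout hBt hBS hNR hm hninn hBrest hs Sb.
have {}Sb := Sb _ _ _ ht.
split.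
  by move=> l B0 [_ <-]; split.
set tau := modk (rB + 1).
set eB := st_ent st (rB,cB).
have inB : in_tab st (rB,cB) by rewrite /in_tab hout hninn.
exists (updi m rB cB), zz, (updi e tau (Some eB)).
have hpend : pend (State (st_out st) (upd (st_inn st) (rB, cB) true) (st_ent st) rest
     (rcons (st_q st) (eB, rB + 1, (rB, cB))) (st_q' st)) = rcons (pend st) (eB, rB + 1, (rB, cB)).
  by rewrite /pend /= hq' !cats0.
have hle : forall p, p \in pend st -> modk p.1.2 = tau -> (p.1.1 <= eB)%O.
  move=> p hp ht'. have [e0 [he0 hpe]] := iR7a I hp.
  apply: le_trans hpe _. apply: (iR8 I hNR hm inB). by rewrite -/tau -ht'.
split; [split|].
- rewrite /=; move=> hr; by split => //; rewrite hq'.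
- by move: hs => /= /path_sorted.
- done.
- by move=> x hx; apply: (iB3 I); rewrite ht inE hx orbT.
- move=> B' hB' hn /=; rewrite updE; case: eqP => // hne.
  apply: (iN1 I hB'); by rewrite ht inE negb_or hn andbT; apply/eqP.
- move=> B' hB' /=; rewrite updE; case: eqP => [e'|_].
    by move: hBrest; rewrite -e' hB'.
  by apply: (iN2 I); rewrite ht inE hB' orbT.
- move=> r hr; rewrite updiE; case: eqP => [->|_]; last by have := iR0 I hr.
  have := iR0 I hNR. lia.
- move=> B' hB'; rewrite updiE; case: eqP => [e'|_]; last by apply: (iM0 I); rewrite ht inE hB' orbT.
  have := proc_same_row (sorted_head_proc hs hB') (esym e') => /= h.
  rewrite le_eqVlt in h; case/orP: h => // /eqP h.
  have : B' = (rB,cB) by case: B' hB' e' h => a b /= _ -> ->.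
  by move=> h'; rewrite -h' hB' in hBrest.
- move=> r c hr /=; rewrite updE; case: eqP => [->|_]; first by [].
  move=> h; exact: (iR9 I hr h).
- move=> r c c' hr; rewrite /in_tab /= !updE.
  case: eqP => _; first by rewrite andbF.
  case: eqP => _; first by rewrite andbF.
  move=> h1 h2 hc; exact: (iR1 I hr h1 h2 hc).
- move=> r c c' hr /= h1 h2; exact: (iR2 I hr h1 h2).
- move=> r hr /=; rewrite updiE; case: eqP => [->|_]; last by have := iR3 I hr. done.
- move=> r c hr; rewrite updiE /in_tab /= updE; case: eqP => [er|ner] hc.
    rewrite er in hc *.
    case: eqP => [_|hne]; first by rewrite andbF.
    move=> /andP[ho hni].
    case: (lerP c (m rB)) => hcm.
      have := iR4 I hNR hcm; rewrite /in_tab ho hni => /(_ isT) [z [h _]]; by rewrite hzz in h.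
    have hcB : c < cB.
      rewrite lt_neqAle hc andbT; apply/eqP => h; apply: hne; by rewrite h.
    by rewrite Sb ?hcm ?hcB in hni.
  case: eqP => [_|_]; first by rewrite andbF.
  move=> h; exact: (iR4 I hr hc h).
- move=> p; rewrite hpend mem_rcons inE => /orP[/eqP ->|hp] z; by rewrite hzz.
- move=> t0; rewrite hpend filter_rcons; case: ifP => ht0; last by have := iR6 I t0.
  rewrite map_rcons; apply: sorted_rcons_le; first by have := iR6 I t0.
  move=> x /mapP[p]; rewrite mem_filter => /andP[/eqP hpt hp] ->.
  apply: hle => //. rewrite hpt. move/eqP: ht0 => /= <-. by rewrite /tau.
- move=> p; rewrite hpend mem_rcons inE => /orP[/eqP ->|hp].
    rewrite updiE /= -/tau eqxx. by exists eB.
  rewrite updiE; case: eqP => [ht'|_]; last by have := iR7a I hp.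
  exists eB; split => //; exact: hle.
- by move=> t0 z; rewrite hzz.
- move=> r c e0 hr; rewrite !updiE /in_tab /= updE.
  case: eqP => [er|ner].
    rewrite er eqxx => hc. case: eqP => [_|_]; first by rewrite andbF.
    move=> /andP[ho hni] [<-]. apply: (iR1 I hNR inB); first by rewrite /in_tab ho hni.
    exact: ltW.
  move=> hc; case: eqP => [_|_]; first by rewrite andbF.
  move=> h; case: eqP => [ht'|_].
    by have := modk_inj1 hr hNR ht'.
  move=> he; exact: (iR8 I hr hc h he).
- split.
  + move=> r; rewrite updiE; case: eqP => [->|_] //; exact: ltW.
  + by move=> l B0 [_ <-] /=; rewrite updiE eqxx.
Qed.

Lemma upd_true_mono (f : box -> bool) B X : f X -> upd f B true X.
Proof. by rewrite updE; case: eqP. Qed.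

Lemma step_remout st B rest m zz e : RInv st m zz e -> st_todo st = B :: rest -> ~~ st_out st B ->
  StepOK st (Some (B,B)) (State (upd (st_out st) B true) (upd (st_inn st) B true) (st_ent st) rest
     (st_q st) (st_q' st)) m zz e.
Proof.
move=> I ht hout.
have hBt : B \in st_todo st by rewrite ht mem_head.
have hBS := iB3 I hBt.
have hNR := HSbox hBS.
have hm := iM0 I hBt.
have [hq' hzz] : st_q' st = [::] /\ (forall r, zz r = None) by apply: (iA I); rewrite ht.
have hu := iB2 I; rewrite ht /= in hu; case/andP: hu => hBrest hurest.
have hs := iB1 I; rewrite ht in hs.
have Sb := S_between I.
move: B ht hout hBt hBS hNR hm hBrest hs Sb => [rB cB] /= ht hout hBt hBS hNR hm hBrest hs Sb.
have {}Sb := Sb _ _ _ ht.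
split.
  by move=> l B0 [_ <-]; split.
exists (updi m rB cB), zz, e.
have hpend : pend (State (upd (st_out st) (rB, cB) true) (upd (st_inn st) (rB, cB) true) (st_ent st) rest
     (st_q st) (st_q' st)) = pend st by [].
split; [split|].
- rewrite /=; move=> hr; by split => //; rewrite hq'.
- by move: hs => /= /path_sorted.
- done.
- by move=> x hx; apply: (iB3 I); rewrite ht inE hx orbT.
- move=> B' hB' hn /=; rewrite updE; case: eqP => // hne.
  apply: (iN1 I hB'); by rewrite ht inE negb_or hn andbT; apply/eqP.
- move=> B' hB' /=; rewrite updE; case: eqP => [e'|_].
    by move: hBrest; rewrite -e' hB'.
  by apply: (iN2 I); rewrite ht inE hB' orbT.
- move=> r hr; rewrite updiE; case: eqP => [->|_]; last by have := iR0 I hr.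
  have := iR0 I hNR. lia.
- move=> B' hB'; rewrite updiE; case: eqP => [e'|_]; last by apply: (iM0 I); rewrite ht inE hB' orbT.
  have := proc_same_row (sorted_head_proc hs hB') (esym e') => /= h.
  rewrite le_eqVlt in h; case/orP: h => // /eqP h.
  have : B' = (rB,cB) by case: B' hB' e' h => a b /= _ -> ->.
  by move=> h'; rewrite -h' hB' in hBrest.
- move=> r c hr /=; rewrite !updE; case: eqP => [_|_]; first by [].
  move=> h; exact: (iR9 I hr h).
- move=> r c c' hr; rewrite /in_tab /= !updE.
  case: eqP => _; first by rewrite andbF.
  case: eqP => _; first by rewrite andbF.
  move=> h1 h2 hc; exact: (iR1 I hr h1 h2 hc).
- move=> r c c' hr /=; rewrite updE; case: eqP => [[er ec]|_] h1 h2; last first.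
    apply: upd_true_mono; exact: (iR2 I hr h1 h2).
  rewrite er ec in h2 *.
  rewrite le_eqVlt in h2; case/orP: h2 => [/eqP ->|h2]; first by rewrite updE eqxx.
  apply: upd_true_mono.
  case: (lerP c' (m rB)) => h3.
    exact: (iR2 I hNR (iR3 I hNR) h3).
  apply: (iR9 I hNR); apply: Sb; by rewrite h3 h2.
- move=> r hr /=; rewrite updiE; case: eqP => [->|_].
    by rewrite updE eqxx.
  apply: upd_true_mono; exact: (iR3 I hr).
- move=> r c hr; rewrite updiE /in_tab /= !updE; case: eqP => [er|ner] hc.
    rewrite er in hc *.
    case: eqP => [_|hne]; first by rewrite andbF.
    move=> /andP[ho hni].
    case: (lerP c (m rB)) => hcm.
      have := iR4 I hNR hcm; rewrite /in_tab ho hni => /(_ isT) [z [h _]]; by rewrite hzz in h.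
    have hcB : c < cB.
      rewrite lt_neqAle hc andbT; apply/eqP => h; apply: hne; by rewrite h.
    by rewrite Sb ?hcm ?hcB in hni.
  case: eqP => [_|_]; first by rewrite andbF.
  move=> h; exact: (iR4 I hr hc h).
- move=> p; rewrite hpend => hp z; by rewrite hzz.
- move=> t0; rewrite hpend; exact: (iR6 I t0).
- move=> p; rewrite hpend => hp; exact: (iR7a I hp).
- by move=> t0 z; rewrite hzz.
- move=> r c e0 hr; rewrite !updiE /in_tab /= !updE.
  case: eqP => [er|ner].
    rewrite er => hc. case: eqP => [_|_]; first by rewrite andbF.
    move=> h he. apply: (iR8 I hNR _ h he). exact: lt_trans hm hc.
  move=> hc; case: eqP => [_|_]; first by rewrite andbF.
  move=> h he; exact: (iR8 I hr hc h he).
- split.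
  + move=> r; rewrite updiE; case: eqP => [->|_] //; exact: ltW.
  + by move=> l B0 [_ <-] /=; rewrite updiE eqxx.
Qed.

Lemma pend_head_min st m zz e x s l q0 : RInv st m zz e -> st_q st = (x,s,l) :: q0 ->
  forall p, p \in q0 ++ st_q' st -> modk p.1.2 = modk s -> (x <= p.1.1)%O.
Proof.
move=> I hq p hp hps.
have := iR6 I (modk s); rewrite /pend hq /= eqxx /= => hsort.
have := order_path_min (@le_trans _ T) hsort => /allP; apply.
apply/mapP; exists p => //; by rewrite mem_filter hps eqxx.
Qed.

Lemma step_place st x s l q B m zz e : RInv st m zz e ->
  st_todo st = [::] -> st_q st = (x, s, l) :: q ->
  (forall B', B'.1 = modk s -> in_tab st B' -> (st_ent st B' <= x)%O) ->
  leftmost_free k st s B ->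
  StepOK st (Some (l, B))
      (State (upd (st_out st) B true) (st_inn st) (upd (st_ent st) B x) [::]
             q (st_q' st)) m zz e.
Proof.
move=> I htodo hq hall [hB1 hBout hBmin].
have hxmin := pend_head_min I hq.
have hp0 : (x,s,l) \in pend st by rewrite /pend hq mem_head.
have hNR : NR (modk s) := modk_NR kpos s.
move: B hB1 hBout hBmin => [rB cB] /= hB1 hBout hBmin.
subst rB.
set rho := modk s in hNR hall hxmin hBout hBmin *.
have hright : forall c, st_out st (rho, c) -> c < cB.
  move=> c hc; rewrite ltNge; apply/negP => h.
  by move: hBout; rewrite (iR2 I hNR hc h).
have hleft : forall c, c < cB -> st_out st (rho, c).
  move=> c hc; apply/negPn/negP => h.
  have := hBmin (rho,c) erefl h => /= h'; lia.
have hgt : m rho < cB.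
  have := hright _ (iR3 I hNR); done.
split.
  by move=> l0 B0 [_ <-]; split.
exists (updi m rho cB), (updi zz rho (Some x)), e.
have hpend : pend (State (upd (st_out st) (rho, cB) true) (st_inn st) (upd (st_ent st) (rho, cB) x) [::]
             q (st_q' st)) = q ++ st_q' st by [].
have hpsub : forall p, p \in q ++ st_q' st -> p \in pend st.
  by move=> p; rewrite /pend hq /= inE => ->; rewrite orbT.
split; [split|].
- by [].
- by [].
- by [].
- by [].
- move=> B' hB' _ /=; apply: (iN1 I hB'); by rewrite htodo.
- by [].
- move=> r hr; rewrite updiE; case: eqP => [->|_]; last by have := iR0 I hr.
  have := iR0 I hNR. lia.
- by [].
- move=> r c hr /= h; apply: upd_true_mono; exact: (iR9 I hr h).
- move=> r c c' hr; rewrite /in_tab /= !updE.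
  case: eqP => [[e1 e2]|n1]; case: eqP => [[e3 e4]|n2] //=.
  + move=> _ /andP[h1 h2] hc. rewrite e1 in h1.
    have := hright _ h1; lia.
  + move=> /andP[h1 h2] _ _. apply: hall; [exact: e3 | by rewrite /in_tab h1 h2].
  + move=> h1 h2 hc; exact: (iR1 I hr h1 h2 hc).
- move=> r c c' hr /=; rewrite updE; case: eqP => [[er ec]|_] h1 h2; last first.
    apply: upd_true_mono; exact: (iR2 I hr h1 h2).
  rewrite er ec in h2 *.
  rewrite le_eqVlt in h2; case/orP: h2 => [/eqP ->|h2]; first by rewrite updE eqxx.
  apply: upd_true_mono; exact: hleft.
- move=> r hr /=; rewrite updiE; case: eqP => [->|_].
    by rewrite updE eqxx.
  apply: upd_true_mono; exact: (iR3 I hr).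
- move=> r c hr; rewrite !updiE /in_tab /= !updE; case: eqP => [er|ner] hc.
    rewrite er in hc *.
    case: eqP => [_|hne] /=; first by exists x.
    move=> /andP[h1 h2]; exists x; split => //; apply: hall; [by [] | by rewrite /in_tab h1 h2].
  case: eqP => [[e1 _]//|_].
  move=> h; exact: (iR4 I hr hc h).
- move=> p; rewrite hpend => hp z; rewrite updiE; case: eqP => [hr [<-]|_].
    exact: hxmin.
  apply: (iR5 I); exact: hpsub.
- move=> t0; rewrite hpend.
  have := iR6 I t0; rewrite /pend hq /=; case: ifP => _ //= /path_sorted //.
- move=> p; rewrite hpend => hp; apply: (iR7a I); exact: hpsub.
- move=> t0 z; rewrite updiE; case: eqP => [->|_]; last exact: (iR7b I).
  move=> [<-]; exact: (iR7a I hp0).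
- move=> r c e0 hr; rewrite !updiE /in_tab /= !updE.
  case: eqP => [er|ner].
    rewrite er => hc. case: eqP => [hh|_]; first by case: hh => hh; rewrite hh ltxx in hc.
    move=> /andP[h1 _]. have := hright _ h1. lia.
  move=> hc; case: eqP => [[e1 _]//|_].
  move=> h he; exact: (iR8 I hr hc h he).
- split.
  + move=> r; rewrite updiE; case: eqP => [->|_] //; exact: ltW.
  + by move=> l0 B0 [_ <-] /=; rewrite updiE eqxx.
Qed.

Lemma step_bump st x s l q B m zz e : RInv st m zz e ->
  st_todo st = [::] -> st_q st = (x, s, l) :: q ->
  leftmost_greater k st s x B ->
  StepOK st (Some (l, B))
      (State (st_out st) (st_inn st) (upd (st_ent st) B x) [::]
             q (rcons (st_q' st) (st_ent st B, s + 1, l))) m zz e.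
Proof.
move=> I htodo hq [hB1 hBin hxB hBmin].
have hxmin := pend_head_min I hq.
have hp0 : (x,s,l) \in pend st by rewrite /pend hq mem_head.
have hNR : NR (modk s) := modk_NR kpos s.
move: B hB1 hBin hxB hBmin => [rB cB] /= hB1 hBin hxB hBmin.
subst rB.
set rho := modk s in hNR hBin hxB hBmin hxmin *.
set y := st_ent st (rho, cB) in hxB *.
have htau : modk (rho + 1) = modk (s + 1) by rewrite /rho modkDml.
set tau := modk (s + 1) in htau *.
have hleq : forall c, c < cB -> in_tab st (rho, c) -> (st_ent st (rho, c) <= x)%O.
  move=> c hc hin; rewrite leNgt; apply/negP => h.
  have := hBmin (rho,c) erefl hin h => /= h'; lia.
have hgt : m rho < cB.
  rewrite ltNge; apply/negP => h.
  have [z [hz hyz]] := iR4 I hNR h hBin.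
  have := iR5 I hp0 hz => /= hzx.
  have := le_trans hyz hzx. by rewrite leNgt hxB.
have hyge : forall p, p \in pend st -> modk p.1.2 = tau -> (p.1.1 <= y)%O.
  move=> p hp hpt; have [e0 [he0 hpe]] := iR7a I hp.
  apply: le_trans hpe _; apply: (iR8 I hNR hgt hBin); by rewrite htau -hpt.
have hzy : forall z, zz tau = Some z -> (z <= y)%O.
  move=> z hz; have [e0 [he0 hze]] := iR7b I hz.
  apply: le_trans hze _; apply: (iR8 I hNR hgt hBin); by rewrite htau.
split.
  by move=> l0 B0 [_ <-]; split.
set p1 := (y, s + 1, l).
exists (updi m rho cB), (updi zz rho (Some x)), (updi e tau (Some y)).
have hpend : pend (State (st_out st) (st_inn st) (upd (st_ent st) (rho, cB) x) [::]
             q (rcons (st_q' st) p1)) = rcons (q ++ st_q' st) p1 by rewrite /pend /= rcons_cat.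
have hpsub : forall p, p \in q ++ st_q' st -> p \in pend st.
  by move=> p; rewrite /pend hq /= inE => ->; rewrite orbT.
have hp1t : modk p1.1.2 = tau by [].
split; [split|].
- by [].
- by [].
- by [].
- by [].
- move=> B' hB' _ /=; apply: (iN1 I hB'); by rewrite htodo.
- by [].
- move=> r hr; rewrite updiE; case: eqP => [->|_]; last by have := iR0 I hr.
  have := iR0 I hNR. lia.
- by [].
- move=> r c hr /= h; exact: (iR9 I hr h).
- move=> r c c' hr; rewrite /in_tab /= !updE.
  case: eqP => [[e1 e2]|n1]; case: eqP => [[e3 e4]|n2] //=.
  + move=> _ h2 hc. apply: ltW; apply: lt_le_trans hxB _.
    rewrite e1 e2 in hc h2 *. exact: (iR1 I hNR hBin h2 hc).
  + move=> h1 _ hc. rewrite e3 in h1 n1 *. apply: hleq => //.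
    rewrite e4 in hc n1; rewrite lt_neqAle hc andbT; apply/eqP => hh; apply: n1; by rewrite hh.
  + move=> h1 h2 hc; exact: (iR1 I hr h1 h2 hc).
- move=> r c c' hr /= h1 h2; exact: (iR2 I hr h1 h2).
- move=> r hr /=; rewrite updiE; case: eqP => [->|_].
    by case/andP: hBin.
  exact: (iR3 I hr).
- move=> r c hr; rewrite !updiE /in_tab /= !updE; case: eqP => [er|ner] hc.
    rewrite er in hc *.
    case: eqP => [_|hne] /=; first by exists x.
    move=> hin; exists x; split => //; apply: hleq => //.
    rewrite lt_neqAle hc andbT; apply/eqP => hh; apply: hne; by rewrite hh.
  case: eqP => [[e1 _]//|_].
  move=> h; exact: (iR4 I hr hc h).
- move=> p; rewrite hpend mem_rcons inE => /orP[/eqP ->|hp] z; rewrite updiE.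
    case: eqP => [hr [<-]|hr]; first exact: ltW.
    rewrite hp1t => hz; exact: hzy.
  case: eqP => [hr [<-]|_]; first exact: hxmin.
  apply: (iR5 I); exact: hpsub.
- move=> t0; rewrite hpend filter_rcons.
  have hs : sorted (fun a b : T => (a <= b)%O) [seq p.1.1 | p <- q ++ st_q' st & modk p.1.2 == t0].
    have := iR6 I t0; rewrite /pend hq /=; case: ifP => _ //= /path_sorted //.
  case: ifP => ht0 //; rewrite map_rcons; apply: sorted_rcons_le => //.
  move=> z /mapP[p]; rewrite mem_filter => /andP[/eqP hpt hp] ->.
  apply: hyge; [exact: hpsub | by rewrite hpt; move/eqP: ht0].
- move=> p; rewrite hpend mem_rcons inE => /orP[/eqP ->|hp]; rewrite updiE.
    by rewrite hp1t eqxx; exists y.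
  case: eqP => [hpt|_]; first by exists y; split => //; apply: hyge => //; exact: hpsub.
  apply: (iR7a I); exact: hpsub.
- move=> t0 z; rewrite !updiE; case: eqP => [->|nt].
    move=> [<-]; case: eqP => [_|nrt]; first by exists y; split => //; exact: ltW.
    exact: (iR7a I hp0).
  move=> hz; case: eqP => [et|_]; last exact: (iR7b I hz).
  exists y; split => //; apply: hzy; by rewrite -et.
- move=> r c e0 hr; rewrite !updiE /in_tab /= !updE.
  case: eqP => [er|ner].
    rewrite er htau eqxx => hc. case: eqP => [hh|_]; first by case: hh => hh; rewrite hh ltxx in hc.
    move=> hin [<-]; apply: (iR1 I hNR hBin hin); exact: ltW.
  move=> hc.
  have hne : ((r,c) == (rho,cB)) = false by apply/eqP => -[].
  have htn : (modk (r+1) == tau) = false.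
    apply/eqP => ht'; apply: ner; exact: modk_inj1 hr hNR (etrans ht' (esym htau)).
  rewrite hne htn => h he; exact: (iR8 I hr hc h he).
- split.
  + move=> r; rewrite updiE; case: eqP => [->|_] //; exact: ltW.
  + by move=> l0 B0 [_ <-] /=; rewrite updiE eqxx.
Qed.

Lemma rinv_ext st o i en q q' m zz e : RInv st m zz e ->
  o = st_out st -> i = st_inn st -> en = st_ent st ->
  pend (State o i en (st_todo st) q q') = pend st ->
  (st_todo st != [::] -> q' = [::]) ->
  RInv (State o i en (st_todo st) q q') m zz e.
Proof.
move=> [hA hB1 hB2 hB3 hN1 hN2 hR0 hM0 hR9 hR1 hR2 hR3 hR4 hR5 hR6 hR7a hR7b hR8] -> -> -> hp ha.
split => //=; try rewrite hp //.
move=> h; split; [exact: ha | by case: (hA h)].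
Qed.

Lemma step_swap st m zz e : RInv st m zz e -> st_todo st = [::] -> st_q st = [::] ->
  StepOK st None (State (st_out st) (st_inn st) (st_ent st) [::] (st_q' st) [::]) m zz e.
Proof.
move=> I ht hq; split => //; exists m, zz, e; split; last by split.
rewrite -ht; apply: rinv_ext => //.
by rewrite /pend /= hq cats0.
Qed.

Lemma rinv_step st ev st' m zz e : RInv st m zz e -> step k st ev st' -> StepOK st ev st' m zz e.
Proof.
move=> I hs; case: hs I.
- move=> st0 B todo ht ho I; exact: step_remin.
- move=> st0 B todo ht ho I; exact: step_remout.
- move=> st0 x s l q B ht hq hall hfree I; exact: (step_place I ht hq hall hfree).
- move=> st0 x s l q B ht hq hgr I; exact: step_bump.
- move=> st0 ht hq _ I; exact: step_swap.
- move=> st0 _ _ _ I; split => //; exists m, zz, e; split => //; split => //.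
Qed.

End RI.

Section QI.
Variables (k : nat) (disp : Order.disp_t) (T : orderType disp).
Variables (S : seq box) (r0 : int).
Hypothesis HSu : uniq S.
Hypothesis kpos : (0 < k)%N.
Local Notation proc := (proc_le k r0).
Definition ord := sort proc S.

Definition lbls (st : state T) : seq box :=
  map (fun p => p.2) (st_q' st) ++ map (fun p => p.2) (st_q st) ++ st_todo st.

Definition QInv (st : state T) (c : box -> nat) : Prop :=
  exists i, (1 <= i)%N /\ subseq (lbls st) ord /\
    (forall l, l \in st_todo st -> c l = 0%N) /\
    (forall p, p \in st_q st -> c p.2 = i) /\
    (forall p, p \in st_q' st -> c p.2 = i.+1) /\
    (st_todo st != [::] -> st_q' st = [::] /\ i = 1%N).

Lemma mkQ st c i : (1 <= i)%N -> subseq (lbls st) ord ->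
    (forall l, l \in st_todo st -> c l = 0%N) ->
    (forall p, p \in st_q st -> c p.2 = i) ->
    (forall p, p \in st_q' st -> c p.2 = i.+1) ->
    (st_todo st != [::] -> st_q' st = [::] /\ i = 1%N) -> QInv st c.
Proof. by move=> *; exists i. Qed.

Lemma ord_uniq : uniq ord.
Proof. by rewrite /ord sort_uniq. Qed.

Lemma lbls_uniq st c : QInv st c -> uniq (lbls st).
Proof. move=> [i [_ [hs _]]]; exact: subseq_uniq hs ord_uniq. Qed.

Lemma uniq_mid (a b c : seq box) x : uniq (a ++ b ++ x :: c) ->
  [/\ x \notin a, x \notin b & x \notin c].
Proof.
move=> hu; have := count_uniq_mem x hu.
rewrite !mem_cat mem_head !orbT !count_cat /= eqxx => h.
have h1 : (count_mem x a + (count_mem x b + (1 + count_mem x c)) = 1)%N by exact: h.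
by split; apply/count_memPn; lia.
Qed.

Lemma is_labelE l b B : is_label l (Some (b, B)) = (b == l).
Proof. by []. Qed.

Lemma qinv_step st ev st' c c' : QInv st c -> step k st ev st' ->
  (forall l, c' l = (c l + is_label l ev)%N) -> QInv st' c'.
Proof.
move=> I hs; case: hs I.
- move=> st0 B todo ht ho [i [hi [hsub [htd [hq [hq' hA]]]]]] hc.
  have [hq'0 hi1] : st_q' st0 = [::] /\ i = 1%N by apply: hA; rewrite ht.
  have hu := subseq_uniq hsub ord_uniq.
  have hl : lbls (State (st_out st0) (upd (st_inn st0) B true) (st_ent st0) todo
     (rcons (st_q st0) (st_ent st0 B, B.1 + 1, B)) (st_q' st0)) = lbls st0.
    by rewrite /lbls /= ht map_rcons cat_rcons.
  apply: (@mkQ _ _ i) => //=.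
  + by rewrite hl.
  + move=> l hl'; rewrite hc is_labelE.
    move: hu; rewrite /lbls ht => /uniq_mid [_ _ hB].
    case: eqP => [hBl|_]; first by move: hB; rewrite hBl hl'.
    by rewrite addn0; apply: htd; rewrite ht inE hl' orbT.
  + move=> p; rewrite mem_rcons inE => /orP[/eqP -> /=|hp].
      by rewrite hc is_labelE eqxx htd ?hi1 // ht mem_head.
    rewrite hc is_labelE; case: eqP => [hBl|_]; last by rewrite addn0; exact: hq.
    move: hu; rewrite /lbls ht => /uniq_mid [_ hn _].
    exfalso; move/negP: hn; apply; rewrite hBl.
    by apply/mapP; exists p.
  + by move=> p; rewrite hq'0.
- move=> st0 B todo ht ho [i [hi [hsub [htd [hq [hq' hA]]]]]] hc.
  have [hq'0 hi1] : st_q' st0 = [::] /\ i = 1%N by apply: hA; rewrite ht.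
  have hu := subseq_uniq hsub ord_uniq.
  move: hu; rewrite /lbls ht => /uniq_mid [_ hn hB].
  apply: (@mkQ _ _ i) => //=.
  + apply: subseq_trans hsub; rewrite /lbls ht /=.
    rewrite !subseq_cat2l. exact: subseq_cons.
  + move=> l hl'; rewrite hc is_labelE.
    case: eqP => [hBl|_]; first by move: hB; rewrite hBl hl'.
    by rewrite addn0; apply: htd; rewrite ht inE hl' orbT.
  + move=> p hp; rewrite hc is_labelE; case: eqP => [hBl|_]; last by rewrite addn0; exact: hq.
    exfalso; move/negP: hn; apply; rewrite hBl.
    by apply/mapP; exists p.
  + by move=> p; rewrite hq'0.
- move=> st0 x s l q B ht hq0 hall hfree [i [hi [hsub [htd [hq [hq' hA]]]]]] hc.
  have hu := subseq_uniq hsub ord_uniq.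
  move: hu; rewrite /lbls ht hq0 /= -(cat0s (l :: _)) => /uniq_mid [hn _ hl].
  rewrite cats0 in hl.
  apply: (@mkQ _ _ i) => //=.
  + apply: subseq_trans hsub; rewrite /lbls ht hq0 /= !cats0.
    rewrite subseq_cat2l. exact: subseq_cons.
  + move=> p hp; rewrite hc is_labelE; case: eqP => [hBl|_]; last by rewrite addn0; apply: hq; rewrite hq0 inE hp orbT.
    by move/negP: hl; case; rewrite hBl; apply/mapP; exists p.
  + move=> p hp; rewrite hc is_labelE; case: eqP => [hBl|_]; last by rewrite addn0; exact: hq'.
    move/negP: hn; case; rewrite hBl.
    by apply/mapP; exists p.
- move=> st0 x s l q B ht hq0 hgr [i [hi [hsub [htd [hq [hq' hA]]]]]] hc.
  have hu := subseq_uniq hsub ord_uniq.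
  move: hu; rewrite /lbls ht hq0 /= -(cat0s (l :: _)) => /uniq_mid [hn _ hl].
  rewrite cats0 in hl.
  apply: (@mkQ _ _ i) => //=.
  + by move: hsub; rewrite /lbls ht hq0 /= !cats0 map_rcons cat_rcons.
  + move=> p hp; rewrite hc is_labelE; case: eqP => [hBl|_]; last by rewrite addn0; apply: hq; rewrite hq0 inE hp orbT.
    by move/negP: hl; case; rewrite hBl; apply/mapP; exists p.
  + move=> p; rewrite mem_rcons inE => /orP[/eqP -> /=|hp].
      by rewrite hc is_labelE eqxx (hq (x,s,l)) ?hq0 ?mem_head // addn1.
    rewrite hc is_labelE; case: eqP => [hBl|_]; last by rewrite addn0; exact: hq'.
    move/negP: hn; case; rewrite hBl.
    by apply/mapP; exists p.
- move=> st0 ht hq0 hq'0 [i [hi [hsub [htd [hq [hq' hA]]]]]] hc.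
  apply: (@mkQ _ _ i.+1) => //=.
  + by move: hsub; rewrite /lbls ht hq0 /= !cats0.
  + move=> p hp; rewrite hc addn0; exact: hq'.
- move=> st0 ht hq0 hq'0 I hc.
  case: I => i [hi [hsub [htd [hq [hq' hA]]]]].
  apply: (@mkQ _ _ i) => //=.
  + by move=> l hl; rewrite hc addn0; apply: htd.
  + by move=> p hp; rewrite hc addn0; apply: hq.
  + by move=> p hp; rewrite hc addn0; apply: hq'.
Qed.

Lemma step_lbls (st st' : state T) ev : step k st ev st' -> subseq (lbls st') (lbls st).
Proof.
case.
- move=> st0 B todo ht ho.
  by rewrite /lbls /= ht map_rcons cat_rcons.
- move=> st0 B todo ht ho.
  rewrite /lbls ht /= !subseq_cat2l; exact: subseq_cons.
- move=> st0 x s l q B ht hq0 hall hfree.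
  rewrite /lbls ht hq0 /= !cats0 subseq_cat2l; exact: subseq_cons.
- move=> st0 x s l q B ht hq0 hgr.
  by rewrite /lbls ht hq0 /= !cats0 map_rcons cat_rcons.
- move=> st0 ht hq0 hq'0.
  by rewrite /lbls ht hq0 /= !cats0.
- by [].
Qed.

Lemma step_head (st st' : state T) ev l b : step k st ev st' -> ev = Some (l, b) ->
  (exists rest, st_todo st = l :: rest) \/
  (st_todo st = [::] /\ exists x s q0, st_q st = (x, s, l) :: q0).
Proof.
case.
- move=> st0 B todo ht ho [hB _]; left; exists todo; by rewrite ht hB.
- move=> st0 B todo ht ho [hB _]; left; exists todo; by rewrite ht hB.
- move=> st0 x s l0 q B ht hq0 hall hfree [hB _]; right; split => //; exists x, s, q; by rewrite hq0 hB.
- move=> st0 x s l0 q B ht hq0 hgr [hB _]; right; split => //; exists x, s, q; by rewrite hq0 hB.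
- by [].
- by [].
Qed.

Lemma step_label_in (st st' : state T) ev l b : step k st ev st' -> ev = Some (l, b) -> l \in lbls st.
Proof.
move=> hs he; case: (step_head hs he) => [[rest ht]|[ht [x [s [q0 hq]]]]];
  rewrite /lbls ?ht ?hq !mem_cat ?mem_head ?orbT //.

Qed.

Lemma ord_before a x b y : subseq (a ++ x :: b) ord -> y \in b -> proc x y.
Proof.
move=> hs hy.
have hsort : sorted proc (a ++ x :: b).
  apply: (subseq_sorted (@proc_trans k kpos S r0 HSu) hs).
  exact: sort_sorted (@proc_total k r0) S.
have [_ h2] := cat_sorted2 hsort.
exact: (sorted_head_proc kpos HSu h2 hy).
Qed.

End QI.

Lemma proj_NR (n k : nat) r c : (0 < k)%N -> NR k r -> proj n k (r, c) = (r, c).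
Proof. move=> kp h; by rewrite /proj /= modk_id // (divk_NR kp h) mul0r addr0. Qed.

Theorem mainTheorem12 (n k : nat) (disp : Order.disp_t) (T : orderType disp)
    (R : tableau T) (S : seq box) (r0 : int)
    (st : nat -> state T) (ev : nat -> event) (P Q : point) :
  (0 < k)%N -> (k < n)%N ->
  is_tableau n k R ->
  multi_input n k R S ->
  is_run k R S r0 st ev ->
  proj n k P \in S -> proj n k Q \in S ->
  pt_lt P Q ->
  forall (r : int) (X Y : point) (tG tH : nat),
    route_pt n k ev P r X tG -> route_pt n k ev Q r Y tH ->
    strictly_left Y X /\ (tH < tG)%N.
Proof.
move=> kpos kn Htab Hmi [Hst0 Hstep] hP hQ hPQ r X Y tG tH hG hH.
case: Hmi => HSu HSbox0 HSnin _ [nu [_ Hnu0]].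
case: Htab => _ _ Hio Hrowp _.
have HSbox : forall B, B \in S -> NR k B.1 by move=> B /HSbox0.
have HSin : forall B, B \in S -> inner R B.1 < B.2.
  by move=> B /HSnin; rewrite /box_in -ltNge.
have Hnu : forall r c, NR k r -> (c <= nu r) = (c <= inner R r) || ((r,c) \in S).
  move=> r1 c hr; have := Hnu0 (r1, c); rewrite /in_part /= (proj_NR _ _ kpos) // => h.
  by apply/idP/idP => [/h [->|->]|/orP[hh|hh]]; rewrite ?orbT //; apply/h; [left|right].
have Hrow : forall r c c', NR k r -> inner R r < c -> c <= c' -> c' <= outer R r ->
    (entry R (r,c) <= entry R (r,c'))%O.
  move=> r1 c c' hr h1 h2 h3.
  have := Hrowp r1 c c'; rewrite !(proj_NR _ _ kpos) //; apply => //; rewrite /in_skew /in_part /= -ltNge.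
    by rewrite h1 (le_trans h2 h3).
  by rewrite h3 (lt_le_trans h1 h2).
have RIall : forall t, exists m zz e, RInv k R S r0 (st t) m zz e /\
    (forall t' l B, (t' < t)%N -> ev t' = Some (l,B) -> B.2 <= m B.1).
  elim=> [|t [m [zz [e [I hist]]]]].
    exists (inner R), (fun _ => None), (fun _ => None); split => //.
    rewrite Hst0; exact: rinv_init.
  have [_ [m' [zz' [e' [I' [hmm hm']]]]]] := rinv_step kpos HSu HSbox Hnu I (Hstep t).
  exists m', zz', e'; split => // t' l B; rewrite ltnS leq_eqVlt => /orP[/eqP ->|ht'] he.
    by rewrite (hm' _ _ he).
  exact: le_trans (hist _ _ _ ht' he) (hmm _).
have colm : forall t1 t2 l1 l2 (b1 b2 : box), (t1 < t2)%N -> ev t1 = Some (l1,b1) ->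
    ev t2 = Some (l2,b2) -> b1.1 = b2.1 -> b1.2 < b2.2.
  move=> t1 t2 l1 l2 b1 b2 h12 e1 e2 hb.
  have [m [zz [e [I hist]]]] := RIall t2.
  have [h1 _] := rinv_step kpos HSu HSbox Hnu I (Hstep t2).
  have [_ h3] := h1 _ _ e2.
  apply: le_lt_trans (hist _ _ _ h12 e1) _; by rewrite hb.
pose cnt t l := count (fun t' => is_label l (ev t')) (iota 0 t).
have cntS : forall t l, cnt t.+1 l = (cnt t l + is_label l (ev t))%N.
  by move=> t l; rewrite /cnt -addn1 iotaD count_cat /= addn0.
have cnt_mono : forall t t' l, (t <= t')%N -> (cnt t l <= cnt t' l)%N.
  move=> t t' l /subnKC <-; elim: (t' - t)%N => [|d IH]; first by rewrite addn0.
  by rewrite addnS cntS; apply: leq_trans IH (leq_addr _ _).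
have QIall : forall t, QInv k S r0 (st t) (cnt t).
  elim=> [|t IH].
    rewrite Hst0; exists 1%N; do !split => //.
  apply: (qinv_step HSu kpos IH (Hstep t)) => l; exact: cntS.
have lbls_mono : forall t t', (t <= t')%N -> {subset lbls (st t') <= lbls (st t)}.
  move=> t t' /subnKC <-; elim: (t' - t)%N => [|d IH]; first by rewrite addn0.
  rewrite addnS => x hx; apply: IH; exact: (mem_subseq (step_lbls (Hstep _)) hx).
case: hG => bG [jG [eG cG rG XG pXG]].
case: hH => bH [jH [eH cH rH YH pYH]].
set Lp := proj n k P in hP eG cG.
set Lq := proj n k Q in hQ eH cH.
have hcG : cnt tG Lp = jG by [].
have hcH : cnt tH Lq = jH by [].
move: hPQ; rewrite /pt_lt /pt_le => /andP[hle hneq].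
have hjj : (jH <= jG)%N.
  have : P.1 <= Q.1 by case/orP: hle => [/ltW //|/andP[/eqP -> _]].
  rewrite rG in rH; move=> h; have : (Posz jH <= Posz jG)%R by lia. by [].
have sameP : jG = jH -> P.1 = Q.1 /\ Q.2 < P.2.
  move=> hj; have e1 : P.1 = Q.1 by move: rH; rewrite rG hj => /addIr.
  split => //; move: hle; rewrite e1 ltxx /= eqxx /= le_eqVlt => /orP[/eqP e2|//].
  by move: hneq; rewrite [P]surjective_pairing [Q]surjective_pairing e1 e2 eqxx.
have projE : forall (Z : point), proj n k Z = (modk k Z.1, Z.2 + divk k Z.1 * shift n k) by [].
have htime : (tH < tG)%N.
  rewrite ltnNge leq_eqVlt; apply/negP => /orP[/eqP etG|hlt].
    move: eH; rewrite -etG eG => hS.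
    have eL : Lp = Lq by move: (f_equal (fun o : event => if o is Some (a,_) then a else Lp) hS).
    have hj : jG = jH by rewrite -hcG -hcH -etG eL.
    have [e1 e2] := sameP hj.
    move: eL; rewrite /Lp /Lq !projE e1 => -[/addIr e3]; by rewrite e3 ltxx in e2.
  have hLq : Lq \in lbls (st tG).
    exact: lbls_mono (ltnW hlt) _ (step_label_in (Hstep tH) eH).
  case: (eqVneq Lp Lq) => [eL|nL].
    have : (cnt tG.+1 Lq <= cnt tH Lq)%N by exact: cnt_mono.
    rewrite cntS eG /= hcH -eL eqxx hcG addn1 => h.
    by move: hjj; rewrite leqNgt h.
  have [i [hi [hsub [htd [hq [hq' hA]]]]]] := QIall tG.
  have hmonoq : (cnt tG Lq <= jH)%N by rewrite -hcH; exact: cnt_mono (ltnW hlt).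
  have final : (jG < cnt tG Lq)%N \/ (jG = cnt tG Lq /\ proc_le k r0 Lp Lq).
    case: (step_head (Hstep tG) eG) => [[rest ht]|[ht [x [s [q0 hq0]]]]].
      have c0 : jG = 0%N by rewrite -hcG htd // ht mem_head.
      move: hLq hsub; rewrite /lbls ht !mem_cat => /orP[/mapP[p hp ->]|/orP[/mapP[p hp ->]|hin]] hsub.
      - by left; rewrite c0 hq'.
      - by left; rewrite c0 hq.
      - right; move: hin; rewrite inE eq_sym (negbTE nL) /= => hin.
        split; first by rewrite c0 htd // ht inE hin orbT.
        apply: (ord_before HSu kpos (a := [seq p.2 | p <- st_q' (st tG)] ++ [seq p.2 | p <- st_q (st tG)]) _ hin).
        by rewrite -catA.
    have ci : jG = i by rewrite -hcG (hq (x,s,Lp)) // hq0 mem_head.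
    move: hLq hsub; rewrite /lbls ht hq0 cats0 !mem_cat => /orP[/mapP[p hp ->]|hin] hsub.
    - by left; rewrite ci hq'.
    - right; move: hin; rewrite /= inE eq_sym (negbTE nL) /= => /mapP[p hp hpL].
      split; first by rewrite ci hpL hq // hq0 inE hp orbT.
      apply: (ord_before HSu kpos (a := [seq p.2 | p <- st_q' (st tG)]) hsub).
      by apply/mapP; exists p.
  case: final => [h|[hj hpr]].
    by move: (leq_trans h hmonoq); rewrite ltnNge hjj.
  have hj2 : jG = jH by apply/eqP; rewrite eqn_leq hjj (leq_trans _ hmonoq) // hj.
  have [e1 e2] := sameP hj2.
  have := proc_same_row hpr; rewrite /Lp /Lq !projE e1 => /(_ erefl) /= h.
  have : P.2 <= Q.2 by lia.
  by rewrite leNgt e2.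
split => //.
have hb : bH.1 = bG.1 by rewrite -pXG -pYH !projE XG YH.
have := colm _ _ _ _ _ _ htime eH eG hb.
rewrite -pXG -pYH !projE XG YH /= => h.
split; [by rewrite XG YH | lia].
Qed.
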